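(* Let $n>2$, $1<k<n$, $G=H_B(n,k)$. For $1\le i\le j\le n-1$ let $P_{i,j}$ be the number of unordered pairs $\{u,v\}$ with $u$ an $i$-vertex of $V_2$, $v$ a $j$-vertex of $V_2$, and $d(u,v)=4$. Then the number of unordered pairs of vertices of $V_2$ at distance $4$ is $$d^{(4)}_{V_2}=\sum_{\substack{1\le i\le j\le n-1\\ k+1\le i+j\le n+k-1}}P_{i,j},$$ where, with all sums over integers $t$ (representing $|u^\dagger\cap v^\dagger|$) satisfying $t\ge 0$, $i+j-n\le t<i+j-k$ and $t<\min\{i,k\}$: - if $i\ne k$, $j\ne k$, $i<j$: $P_{i,j}=\sum_t\binom{n}{i}2^{i-1}2^{j-1}\binom{n-i}{j-t}\binom{i}{t}$; - if $i=k<j$: $P_{i,j}=\sum_t\binom{n}{k}(2^{k-1}-1)2^{j-1}\binom{n-k}{j-t}\binom{k}{t}$; - if $i<j=k$: $P_{i,j}=\sum_t\binom{n}{i}2^{i-1}(2^{k-1}-1)\binom{n-i}{k-t}\binom{i}{t}$; - if $i=j=k$: $P_{i,j}=\frac12\sum_t\binom{n}{k}(2^{k-1}-1)^2\binom{n-k}{k-t}\binom{k}{t}$; - if $i=j\ne k$: $P_{i,j}=\frac12\sum_t\binom{n}{i}2^{2(i-1)}\binom{n-i}{i-t}\binom{i}{t}$.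
   Context: Fix integers $n\ge 2$ and $1\le k<n$ and positive real numbers $x_1<x_2<\dots<x_n$. Let $\mathscr{B}_n=\{\pm x_1,\pm x_2,\dots,\pm x_{n-1},x_n\}$ (so $-x_n\notin\mathscr{B}_n$). Let $\phi(\mathscr{B}_n)$ be the family of all nonempty subsets $S\subseteq\mathscr{B}_n$ whose elements have pairwise distinct absolute values and whose element of largest absolute value is positive. Let $\mathscr{B}_n^+=\{x_1,\dots,x_n\}$, let $V_1$ be the set of all $k$-element subsets of $\mathscr{B}_n^+$, and let $V_2=\phi(\mathscr{B}_n)\setminus V_1$. For $A\in\phi(\mathscr{B}_n)$ put $A^\dagger=\{|a|:a\in A\}$. The bipartite Kneser B type-$k$ graph $H_B(n,k)$ is the simple graph with vertex set $V_1\cup V_2$ in which $X\in V_1$ and $Y\in V_2$ are adjacent if and only if $X\subseteq Y^\dagger$ or $Y^\dagger\subseteq X$, and there are no other edges. An $r$-vertex is a vertex having exactly $r$ elements. $d(u,v)$ denotes graph distance. *)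

(* Defs.v *)
From mathcomp Require Import all_boot all_order.
Set Implicit Arguments. Unset Strict Implicit. Unset Printing Implicit Defensive.

(* Signed elements: (i, true) stands for x_(i+1), (i, false) for -x_(i+1).
   The absolute value |a| is (a.1, true); absolute values are ordered like
   the indices (since x_1 < ... < x_n). *)
Definition elt (n : nat) := ('I_n * bool)%type.

(* B_n = {+-x_1, ..., +-x_(n-1), x_n}: all signed elements except -x_n. *)
Definition Bn (n : nat) : {set elt n} :=
  [set a : elt n | a.2 || (val a.1 != n.-1)].

Definition Bplus (n : nat) : {set elt n} := [set a : elt n | a.2].

Definition dagger (n : nat) (S : {set elt n}) : {set elt n} :=
  [set (a.1, true) | a in S].

Definition in_phi (n : nat) (S : {set elt n}) : bool :=
  [&& S != set0, S \subset Bn n,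
      [forall a in S, [forall b in S, (a.1 == b.1) ==> (a == b)]]
    & [forall a in S, [forall b in S, (val b.1 <= val a.1)] ==> a.2]].

Definition V1 (n k : nat) (X : {set elt n}) : bool :=
  (X \subset Bplus n) && (#|X| == k).

Definition V2 (n k : nat) (Y : {set elt n}) : bool :=
  in_phi Y && ~~ V1 k Y.

(* Adjacency of H_B(n,k) on the type {set elt n} (non-vertices are isolated). *)
Definition adjB (n k : nat) (X Y : {set elt n}) : bool :=
  (V1 k X && V2 k Y && ((X \subset dagger Y) || (dagger Y \subset X)))
  || (V1 k Y && V2 k X && ((Y \subset dagger X) || (dagger X \subset Y))).

Fixpoint walkB (n k l : nat) (u v : {set elt n}) : bool :=
  match l with
  | 0 => u == v
  | l'.+1 => [exists w, adjB k u w && walkB k l' w v]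
  end.

Definition distB (n k m : nat) (u v : {set elt n}) : bool :=
  walkB k m u v && [forall l : 'I_m, ~~ walkB k l u v].

Definition Ppairs (n k i j : nat) : {set {set {set elt n}}} :=
  [set E : {set {set elt n}} | [exists u, [exists v,
     [&& E == [set u; v], u != v, V2 k u, V2 k v,
         #|u| == i, #|v| == j & distB k 4 u v]]]].

Definition P (n k i j : nat) : nat := #|Ppairs n k i j|.

Definition d4V2 (n k : nat) : nat :=
  #|[set E : {set {set elt n}} | [exists u, [exists v,
     [&& E == [set u; v], u != v, V2 k u, V2 k v & distB k 4 u v]]]]|.

Definition tsum (n k i j : nat) (F : nat -> nat) : nat :=
  \sum_(0 <= t < minn i k | (i + j <= n + t) && (t + k < i + j)) F t.

(* Main.v *)
Require Import Defs.
From mathcomp Require Import all_boot all_order.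
From mathcomp Require Import zify.
Set Implicit Arguments. Unset Strict Implicit. Unset Printing Implicit Defensive.


Lemma in_Bplus n (a : elt n) : (a \in Bplus n) = a.2.
Proof. by rewrite inE. Qed.

Lemma Bplus_eq n (a : elt n) : a \in Bplus n -> a = (a.1, true).
Proof. by rewrite in_Bplus; case: a => x [] . Qed.

Lemma card_Bplus n : #|Bplus n| = n.
Proof.
have -> : Bplus n = [set (x, true) | x : 'I_n].
  apply/setP => -[x b]; rewrite inE; apply/idP/imsetP => [/= -> | [y _ [-> ->]]] //.
  by exists x.
rewrite card_imset ?card_ord //; by move=> x y [].
Qed.

Lemma dagger_sub n (u : {set elt n}) : dagger u \subset Bplus n.
Proof. by apply/subsetP => a /imsetP [b _ ->]; rewrite in_Bplus. Qed.

Lemma dagger_id n (S : {set elt n}) : S \subset Bplus n -> dagger S = S.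
Proof.
move=> /subsetP sS; apply/setP => a; apply/imsetP/idP => [[b bS ->]|aS].
  by rewrite -Bplus_eq ?sS.
by exists a => //; rewrite -Bplus_eq ?sS.
Qed.

Lemma phi_inj n (u : {set elt n}) a b : in_phi u -> a \in u -> b \in u -> a.1 = b.1 -> a = b.
Proof.
case/and4P => _ _ /forallP H _ au bu e.
by move: (H a); rewrite au /= => /forallP /(_ b); rewrite bu e eqxx /= => /eqP.
Qed.

Lemma card_dagger n (u : {set elt n}) : in_phi u -> #|dagger u| = #|u|.
Proof.
move=> ph; rewrite card_in_imset // => a b au bu [e].
exact: phi_inj ph au bu e.
Qed.

Lemma V1_V2 n k (u : {set elt n}) : V2 k u -> ~~ V1 k u.
Proof. by case/andP. Qed.


Lemma sandwich (T : finType) (C D : {set T}) m :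
  C \subset D -> #|C| <= m -> m <= #|D| ->
  exists X : {set T}, [/\ C \subset X, X \subset D & #|X| = m].
Proof.
move=> CD Cm mD.
have : 0 < #|[set S : {set T} | S \subset D :\: C & #|S| == m - #|C|]|.
  rewrite cards_draws bin_gt0 cardsD (setIidPr CD); lia.
case/card_gt0P => S; rewrite inE => /andP [SD /eqP cS].
have dis : C :&: S = set0.
  apply/setP => x; rewrite !inE; apply/negbTE/andP => -[xC xS].
  by move/subsetP: SD => /(_ x xS); rewrite !inE xC.
exists (C :|: S); split.
- exact: subsetUl.
- by rewrite subUset CD (subset_trans SD) // subsetDl.
- rewrite cardsU dis cards0 cS; lia.
Qed.


Definition relS n (X A : {set elt n}) := (X \subset A) || (A \subset X).

Lemma adj_V2 n k (u w : {set elt n}) : V2 k u ->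
  adjB k u w = V1 k w && relS w (dagger u).
Proof. by move=> hu; rewrite /adjB (negbTE (V1_V2 hu)) hu /= andbT. Qed.

Lemma adj_V2r n k (w v : {set elt n}) : V2 k v ->
  adjB k w v = V1 k w && relS w (dagger v).
Proof. by move=> hv; rewrite /adjB (negbTE (V1_V2 hv)) hv /= andbT orbF. Qed.

Lemma adj_V1 n k (u w : {set elt n}) : V1 k u -> adjB k u w -> V2 k w.
Proof.
move=> h; have h2 : V2 k u = false by rewrite /V2 h andbF.
by rewrite /adjB h2 !andbF orbF => /andP [/andP []].
Qed.

Lemma walk1 n k (u v : {set elt n}) : V2 k u -> V2 k v -> ~~ walkB k 1 u v.
Proof.
move=> hu hv; apply/existsP => -[w /andP [a /eqP e]]; subst w.
by rewrite adj_V2 // (negbTE (V1_V2 hv)) in a.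
Qed.

Lemma walk3 n k (u v : {set elt n}) : V2 k u -> V2 k v -> ~~ walkB k 3 u v.
Proof.
move=> hu hv; apply/existsP => -[w1 /andP [a1 /existsP [w2 /andP [a2
  /existsP [w3 /andP [a3 /eqP e]]]]]]; subst w3.
rewrite adj_V2 // in a1; case/andP: a1 => v1 _.
have v2 := adj_V1 v1 a2.
by rewrite adj_V2 // (negbTE (V1_V2 hv)) in a3.
Qed.

Lemma walk2 n k (u v : {set elt n}) : V2 k u -> V2 k v ->
  walkB k 2 u v = [exists X, V1 k X && relS X (dagger u) && relS X (dagger v)].
Proof.
move=> hu hv; apply/existsP/existsP => -[X].
  case/andP => a1 /existsP [w /andP [a2 /eqP e]]; subst w.
  exists X; rewrite adj_V2 // in a1; rewrite adj_V2r // in a2.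
  by case/andP: a1 => -> ->; case/andP: a2 => _ ->.
case/andP => /andP [x1 r1] r2; exists X; rewrite adj_V2 // x1 r1 /=.
apply/existsP; exists v; by rewrite adj_V2r // x1 r2 /= eqxx.
Qed.

Lemma Bplus_V2 n k : 0 < n -> k != n -> V2 k (Bplus n).
Proof.
move=> n0 kn; apply/andP; split; last first.
  by rewrite /V1 card_Bplus eq_sym (negbTE kn) andbF.
apply/and4P; split.
- apply/set0Pn; exists (Ordinal n0, true); by rewrite in_Bplus.
- by apply/subsetP => a; rewrite !inE => ->.
- apply/forallP => a; apply/implyP => ha; apply/forallP => b; apply/implyP => hb.
  apply/implyP => /eqP e; rewrite (Bplus_eq ha) (Bplus_eq hb) e //.
- apply/forallP => a; apply/implyP => ha; apply/implyP => _; by rewrite -in_Bplus.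
Qed.

Lemma nbr_exists n k (u : {set elt n}) : k <= n ->
  exists X, V1 k X && relS X (dagger u).
Proof.
move=> kn.
case: (leqP k #|dagger u|) => h.
  have c0 : #|(set0 : {set elt n})| <= k by rewrite cards0.
  have [X [_ XA cX]] := sandwich (sub0set (dagger u)) c0 h.
  exists X; rewrite /V1 /relS XA cX eqxx (subset_trans XA (dagger_sub u)) //.
have c1 : k <= #|Bplus n| by rewrite card_Bplus.
have [X [AX XB cX]] := sandwich (dagger_sub u) (ltnW h) c1.
by exists X; rewrite /V1 /relS XB cX eqxx AX orbT.
Qed.

Lemma walk4 n k (u v : {set elt n}) : 0 < n -> k < n -> V2 k u -> V2 k v ->
  walkB k 4 u v.
Proof.
move=> n0 kn hu hv.
have [X /andP [x1 r1]] := nbr_exists u (ltnW kn).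
have [Y /andP [y1 r2]] := nbr_exists v (ltnW kn).
have hF := Bplus_V2 n0 (negbT (ltn_eqF kn)).
apply/existsP; exists X; rewrite adj_V2 // x1 r1 /=.
apply/existsP; exists (Bplus n); rewrite adj_V2r // x1 /relS dagger_id //.
case/andP: x1 => -> _ /=.
apply/existsP; exists Y; rewrite adj_V2 // y1 /relS dagger_id //.
case/andP: (y1) => -> _ /=.
apply/existsP; exists v; rewrite adj_V2r // y1 r2 /=.
by rewrite eqxx.
Qed.


Definition NC k a b t := [&& t < k, t + k < a + b, t < a & t < b].

Lemma common_iff n k (A B : {set elt n}) : k <= n ->
  A \subset Bplus n -> B \subset Bplus n ->
  [exists X, V1 k X && relS X A && relS X B] = ~~ NC k #|A| #|B| #|A :&: B|.
Proof.
move=> kn sA sB.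
have ta : #|A :&: B| <= #|A| by apply/subset_leq_card/subsetIl.
have tb : #|A :&: B| <= #|B| by apply/subset_leq_card/subsetIr.
have cU := cardsU A B.
have un : #|A :|: B| <= n.
  have := subset_leq_card (_ : A :|: B \subset Bplus n).
  by rewrite card_Bplus; apply; rewrite subUset sA sB.
have mk : forall X : {set elt n}, X \subset Bplus n -> #|X| = k -> relS X A -> relS X B ->
   [exists X, V1 k X && relS X A && relS X B].
  by move=> X sX cX r1 r2; apply/existsP; exists X; rewrite /V1 sX cX eqxx r1 r2.
apply/idP/idP.
  case/existsP => X /andP [/andP [/andP [sX /eqP cX] r1] r2].
  rewrite /NC; apply/negP => /and4P [h1 h2 h3 h4].
  case/orP: r1 => r1; case/orP: r2 => r2.
  - have : #|X| <= #|A :&: B| by apply/subset_leq_card; rewrite subsetI r1 r2.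
    lia.
  - have e : A :&: B = B by apply/setIidPr/(subset_trans r2).
    rewrite e in h4; lia.
  - have e : A :&: B = A by apply/setIidPl/(subset_trans r1).
    rewrite e in h3; lia.
  - have : #|A :|: B| <= #|X| by apply/subset_leq_card; rewrite subUset r1 r2.
    lia.
rewrite /NC !negb_and -!leqNgt => H.
case: (leqP k #|A :&: B|) => h1.
  have c0 : #|(set0 : {set elt n})| <= k by rewrite cards0.
  have [X [_ XA cX]] := sandwich (sub0set (A :&: B)) c0 h1.
  apply: (mk X) => //.
  - exact: subset_trans XA (subset_trans (subsetIl _ _) sA).
  - by rewrite /relS (subset_trans XA (subsetIl _ _)).
  - by rewrite /relS (subset_trans XA (subsetIr _ _)).
case: (leqP (#|A| + #|B|) (#|A :&: B| + k)) => h2.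
  have c1 : #|A :|: B| <= k by lia.
  have c2 : k <= #|Bplus n| by rewrite card_Bplus.
  have c3 : A :|: B \subset Bplus n by rewrite subUset sA sB.
  have [X [UX XB cX]] := sandwich c3 c1 c2.
  apply: (mk X) => //.
  - by rewrite /relS (subset_trans (subsetUl _ _) UX) orbT.
  - by rewrite /relS (subset_trans (subsetUr _ _) UX) orbT.
case: (leqP #|A| #|A :&: B|) => h3.
  have e : A :&: B = A by apply/eqP; rewrite eqEcard subsetIl h3.
  have AB : A \subset B by rewrite -e subsetIr.
  rewrite e in h1 h2.
  case: (leqP k #|A|) => h4.
    have c0 : #|(set0 : {set elt n})| <= k by rewrite cards0.
    have [X [_ XA cX]] := sandwich (sub0set A) c0 h4.
    apply: (mk X) => //.
    - exact: subset_trans XA sA.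
    - by rewrite /relS XA.
    - by rewrite /relS (subset_trans XA AB).
  have c1 : #|A| <= k by lia.
  have c2 : k <= #|B| by lia.
  have [X [AX XB cX]] := sandwich AB c1 c2.
  apply: (mk X) => //.
  - exact: subset_trans XB sB.
  - by rewrite /relS AX orbT.
  - by rewrite /relS XB.
have h4 : #|B| <= #|A :&: B| by move: H; lia.
have e : A :&: B = B by apply/eqP; rewrite eqEcard subsetIr h4.
have BA : B \subset A by rewrite -e subsetIl.
rewrite e in h1 h2.
case: (leqP k #|B|) => h5.
  have c0 : #|(set0 : {set elt n})| <= k by rewrite cards0.
  have [X [_ XB cX]] := sandwich (sub0set B) c0 h5.
  apply: (mk X) => //.
  - exact: subset_trans XB sB.
  - by rewrite /relS (subset_trans XB BA).
  - by rewrite /relS XB.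
have c1 : #|B| <= k by lia.
have c2 : k <= #|A| by lia.
have [X [BX XA cX]] := sandwich BA c1 c2.
apply: (mk X) => //.
- exact: subset_trans XA sA.
- by rewrite /relS XA.
- by rewrite /relS BX orbT.
Qed.

Lemma dist4 n k (u v : {set elt n}) : 0 < n -> k < n -> V2 k u -> V2 k v ->
  distB k 4 u v = NC k #|u| #|v| #|dagger u :&: dagger v|.
Proof.
move=> n0 kn hu hv.
have pu : in_phi u by case/andP: hu.
have pv : in_phi v by case/andP: hv.
rewrite -(card_dagger pu) -(card_dagger pv).
rewrite -[RHS]negbK -common_iff ?dagger_sub // ?(ltnW kn) // -walk2 //.
rewrite /distB walk4 //=.
apply/forallP/idP => [H | H l].
  by move: (H (Ordinal (isT : 2 < 4))).
case: l => -[|[|[|[|l]]]] //= _.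
- apply/negP => /eqP e; subst v.
  move: H; change (~~ walkB k 2 u u -> False); rewrite walk2 // => /negP; apply; apply/existsP.
  have [X /andP [x1 r1]] := nbr_exists u (ltnW kn).
  by exists X; rewrite x1 r1.
- exact: walk1.
- exact: walk3.
Qed.


Lemma ord_le_pred n (i : 'I_n) : val i <= n.-1.
Proof. by rewrite -ltnS (ltn_predK (ltn_ord i)) ltn_ord. Qed.

Definition gS n (A N : {set elt n}) : {set elt n} := [set (a.1, a \notin N) | a in A].

Lemma gmem n (A N : {set elt n}) x : A \subset Bplus n -> x \in A ->
  ((x.1, false) \in gS A N) = (x \in N).
Proof.
move=> /subsetP sA xA; apply/imsetP/idP => [[b bA [e1 e2]]|xN].
  have eb : b = x by rewrite (Bplus_eq (sA _ bA)) (Bplus_eq (sA _ xA)) e1.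
  by subst b; move: e2; case: (x \in N).
by exists x => //; rewrite xN.
Qed.

Lemma gS_inj n (A N1 N2 : {set elt n}) : A \subset Bplus n ->
  N1 \subset A -> N2 \subset A -> gS A N1 = gS A N2 -> N1 = N2.
Proof.
move=> sA s1 s2 e.
have H : forall N N' : {set elt n}, N \subset A -> gS A N = gS A N' -> N \subset N'.
  move=> N N' sN e'; apply/subsetP => x xN.
  have xA : x \in A by apply: (subsetP sN).
  by rewrite -(gmem N' sA xA) -e' gmem.
by apply/eqP; rewrite eqEsubset (H _ _ s1 e) (H _ _ s2 (esym e)).
Qed.

Lemma phi_count n (A : {set elt n}) M : A \subset Bplus n -> M \in A ->
  (forall b, b \in A -> val b.1 <= val M.1) ->
  #|[set u | in_phi u && (dagger u == A)]| = 2 ^ (#|A| - 1).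
Proof.
move=> sA MA Mmax.
have AB := subsetP sA.
have -> : [set u | in_phi u && (dagger u == A)] = [set gS A N | N in powerset (A :\ M)].
  apply/setP => u; rewrite inE; apply/idP/imsetP.
  - case/andP => ph /eqP dA.
    pose N := [set (a.1, true) | a in [set a in u | ~~ a.2]].
    have Nmem : forall x, x \in u -> ((x.1, true) \in N) = ~~ x.2.
      move=> x xu; apply/imsetP/idP => [[d] | nx].
        rewrite inE => /andP [du nd] [e].
        by rewrite -(phi_inj ph du xu (esym e)).
      by exists x => //; rewrite inE xu.
    exists N.
      rewrite powersetE; apply/subsetP => y /imsetP [d]; rewrite inE => /andP [du nd] ->.
      rewrite !inE; apply/andP; split; last first.
        by rewrite -dA; apply/imsetP; exists d.
      apply/eqP => eM.
      have : M \in dagger u by rewrite dA.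
      case/imsetP => c cu eMc.
      have Hd : [forall b in u, val b.1 <= val d.1] ==> d.2.
        by case/and4P: ph => _ _ _ /forallP /(_ d); rewrite du.
      have : [forall b in u, val b.1 <= val d.1].
        apply/forallP => e; apply/implyP => eu.
        have : (e.1, true) \in A by rewrite -dA; apply/imsetP; exists e.
        by move/Mmax => /=; rewrite -eM.
      by move/(implyP Hd); rewrite (negbTE nd).
    apply/setP => x; apply/idP/imsetP => [xu | [a aA ->]].
      exists (x.1, true); first by rewrite -dA; apply/imsetP; exists x.
      by rewrite Nmem //; case: x xu => ? [].
    have : a \in dagger u by rewrite dA.
    case/imsetP => c cu eac; subst a.
    by rewrite /= Nmem // negbK; case: c cu {aA}.
  - case => N; rewrite powersetE => sN ->.
    have NA : forall a, a \in N -> a \in A by move=> a /(subsetP sN); rewrite inE => /andP [].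
    have MN : M \notin N by apply/negP => /(subsetP sN); rewrite !inE eqxx.
    apply/andP; split; last first.
      apply/eqP/setP => x; apply/imsetP/idP => [[c /imsetP [a aA ->] ->] | xA].
        by rewrite /= -Bplus_eq ?AB.
      exists (x.1, x \notin N); first by apply/imsetP; exists x.
      by rewrite /= -Bplus_eq ?AB.
    have eqM : forall a, a \in A -> val M.1 <= val a.1 -> a = M.
      move=> a aA le; rewrite (Bplus_eq (AB _ aA)) (Bplus_eq (AB _ MA)).
      by congr (_, _); apply/val_inj/eqP; rewrite eqn_leq le Mmax.
    apply/and4P; split.
    - by apply/set0Pn; exists (M.1, M \notin N); apply/imsetP; exists M.
    - apply/subsetP => c /imsetP [a aA ->]; rewrite inE /=.
      case: (eqVneq (val a.1) n.-1) => e; last by rewrite orbT.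
      have : val M.1 <= val a.1 by rewrite e; apply: ord_le_pred.
      by move/(eqM _ aA) => ->; rewrite MN.
    - apply/forallP => c; apply/implyP => /imsetP [a aA ->].
      apply/forallP => d; apply/implyP => /imsetP [b bA ->] /=.
      apply/implyP => /eqP e.
      by rewrite (Bplus_eq (AB _ aA)) (Bplus_eq (AB _ bA)) e.
    - apply/forallP => c; apply/implyP => /imsetP [a aA ->].
      apply/implyP => /forallP /(_ (M.1, M \notin N)).
      rewrite (_ : (M.1, M \notin N) \in _) /=; last by apply/imsetP; exists M.
      by move/(eqM _ aA) => ->.
rewrite card_in_imset; last first.
  move=> N1 N2; rewrite !powersetE => s1 s2; apply: gS_inj => //.
  - exact: subset_trans s1 (subsetDl _ _).
  - exact: subset_trans s2 (subsetDl _ _).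
by rewrite card_powerset (cardsD1 M A) MA add1n subn1.
Qed.


Lemma Bplus_phi n (A : {set elt n}) : A \subset Bplus n -> A != set0 -> in_phi A.
Proof.
move=> /subsetP sA nA; apply/and4P; split => //.
- by apply/subsetP => a /sA; rewrite !inE => ->.
- apply/forallP => a; apply/implyP => ha; apply/forallP => b; apply/implyP => hb.
  by apply/implyP => /eqP e; rewrite (Bplus_eq (sA _ ha)) (Bplus_eq (sA _ hb)) e.
- by apply/forallP => a; apply/implyP => /sA ha; apply/implyP => _; rewrite -in_Bplus.
Qed.

Lemma V2_count n k (A : {set elt n}) : A \subset Bplus n -> 0 < #|A| ->
  #|[set u | V2 k u && (dagger u == A)]| = 2 ^ (#|A| - 1) - (#|A| == k).
Proof.
move=> sA cA.
have [a0 a0A] : exists a0, a0 \in A by apply/card_gt0P.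
have [M MA Mmax] : exists2 M, M \in A & forall b, b \in A -> val b.1 <= val M.1.
  case: (@arg_maxnP _ a0 (mem A) (fun a : elt n => val a.1) a0A) => M MA H.
  by exists M.
rewrite -(phi_count sA MA Mmax).
set S1 := [set u | in_phi u && (dagger u == A)].
have -> : [set u | V2 k u && (dagger u == A)] = S1 :\: [set u | V1 k u].
  by apply/setP => u; rewrite !inE /V2; case: (in_phi u); case: (V1 k u).
rewrite cardsD; congr (_ - _).
have -> : S1 :&: [set u | V1 k u] = [set u | (u == A) && (#|A| == k)].
  apply/setP => u; rewrite !inE; apply/idP/idP.
    case/andP => /andP [ph /eqP dA] /andP [su /eqP cu].
    have e : u = A by rewrite -dA dagger_id.
    by rewrite e eqxx -cu e eqxx.
  case/andP => /eqP -> /eqP cA'; rewrite Bplus_phi ?dagger_id ?eqxx /V1 ?sA ?cA' ?eqxx //.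
  by rewrite -card_gt0.
case: (#|A| == k).
  by rewrite (_ : [set u | (u == A) && true] = [set A]) ?cards1 //; apply/setP => u; rewrite !inE andbT.
by rewrite (_ : [set u | (u == A) && false] = set0) ?cards0 //; apply/setP => u; rewrite !inE andbF.
Qed.


Lemma split_SR (T : finType) (A C S R : {set T}) :
  S \subset A -> R \subset C :\: A -> ((S :|: R) :&: A = S) /\ ((S :|: R) :\: A = R).
Proof.
move=> /subsetP sS /subsetP sR; split; apply/setP => x; rewrite !inE.
- case xS: (x \in S); first by rewrite (sS _ xS).
  by case xR: (x \in R) => //=; move: (sR _ xR); rewrite !inE => /andP [/negbTE ->].
- case xR: (x \in R).
    by move: (sR _ xR); rewrite !inE => /andP [->]; rewrite orbT.
  by case xS: (x \in S); rewrite ?(sS _ xS) //= andbF.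
Qed.

Lemma inter_count n (A : {set elt n}) i j t : A \subset Bplus n -> #|A| = i -> t <= j ->
  #|[set B : {set elt n} | (B \subset Bplus n) && (#|B| == j) && (#|A :&: B| == t)]|
   = 'C(i, t) * 'C(n - i, j - t).
Proof.
move=> sA cA tj.
set D1 := [set S : {set elt n} | S \subset A & #|S| == t].
set D2 := [set R : {set elt n} | R \subset Bplus n :\: A & #|R| == j - t].
have -> : [set B : {set elt n} | (B \subset Bplus n) && (#|B| == j) && (#|A :&: B| == t)]
   = [set (p.1 :|: p.2) | p in setX D1 D2].
  apply/setP => B; rewrite inE; apply/idP/imsetP.
  - case/andP => /andP [sB /eqP cB] /eqP cI.
    exists (A :&: B, B :\: A).
      rewrite !inE subsetIl cI eqxx /=.
      by rewrite setSD // cardsD setIC cB cI eqxx.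
    by apply/setP => x /=; rewrite !inE; case: (x \in A); case: (x \in B).
  - case=> -[S R]; rewrite !inE /= => /andP [/andP [sS /eqP cS] /andP [sR /eqP cR]] ->.
    have [e1 _] := split_SR sS sR.
    have dis : S :&: R = set0.
      apply/setP => x; rewrite !inE; apply/negbTE/andP => -[xS xR].
      by move/subsetP: sR => /(_ x xR); rewrite !inE (subsetP sS _ xS).
    rewrite subUset (subset_trans sS sA) (subset_trans sR (subsetDl _ _)) /=.
    by rewrite setIC e1 cS eqxx cardsU dis cards0 cS cR andbT; apply/eqP; lia.
rewrite card_in_imset; last first.
  move=> [S1 R1] [S2 R2]; rewrite !inE /= => /andP [/andP [s1 _] /andP [r1 _]]
    /andP [/andP [s2 _] /andP [r2 _]] e.
  have [a1 b1] := split_SR s1 r1; have [a2 b2] := split_SR s2 r2.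
  move: e => /= e; congr (_, _); [by rewrite -a1 e a2 | by rewrite -b1 e b2].
rewrite cardsX !cards_draws cA cardsD (setIidPr sA) card_Bplus cA //.
Qed.


Definition sgn k m := 2 ^ (m - 1) - (m == k).

Lemma group_sum n k (h : {set elt n} -> nat) m : 0 < m ->
  \sum_(u : {set elt n} | V2 k u && (#|u| == m)) h (dagger u)
  = sgn k m * \sum_(A : {set elt n} | (A \subset Bplus n) && (#|A| == m)) h A.
Proof.
move=> m0.
rewrite (partition_big (@dagger n) (fun A : {set elt n} => (A \subset Bplus n) && (#|A| == m))); last first.
  move=> u /andP [/andP [ph _] cu]; by rewrite dagger_sub card_dagger.
rewrite big_distrr /=; apply: eq_bigr => A /andP [sA /eqP cA].
rewrite (eq_bigr (fun _ => h A)); last by move=> u /andP [_ /eqP ->].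
rewrite sum_nat_const; congr (_ * _).
rewrite /sgn -cA -(V2_count k sA) ?cA //.
apply: eq_card => u; rewrite inE unfold_in /=.
case hu: (V2 k u) => //=; case dA: (dagger u == A); rewrite ?andbF ?andbT //.
case/andP: hu => ph _; by rewrite -cA -(eqP dA) card_dagger // eqxx.
Qed.


Lemma sum_ind (T : finType) (P Q : pred T) :
  \sum_(x | P x) (Q x : nat) = #|[set x | P x && Q x]|.
Proof.
rewrite (eq_bigr (fun x => if Q x then 1 else 0)); last by move=> x _; case: (Q x).
by rewrite -big_mkcondr sum1_card cardsE.
Qed.

Lemma card_pairs (T1 T2 : finType) (R : T1 -> T2 -> bool) :
  #|[set p : T1 * T2 | R p.1 p.2]| = \sum_(u : T1) \sum_(v : T2) (R u v : nat).
Proof.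
rewrite (pair_big xpredT xpredT (fun u v => (R u v : nat))) /=.
by rewrite (sum_ind xpredT (fun p : T1 * T2 => R p.1 p.2)).
Qed.

Lemma Qcount n k i j t : 0 < i -> 0 < j -> t <= j ->
  #|[set p : {set elt n} * {set elt n} | [&& V2 k p.1, V2 k p.2, #|p.1| == i,
      #|p.2| == j & #|dagger p.1 :&: dagger p.2| == t]]|
  = 'C(n, i) * sgn k i * sgn k j * 'C(i, t) * 'C(n - i, j - t).
Proof.
move=> i0 j0 tj.
rewrite (card_pairs (fun u v => [&& V2 k u, V2 k v, #|u| == i,
      #|v| == j & #|dagger u :&: dagger v| == t])).
pose h (A : {set elt n}) := \sum_(v : {set elt n} | V2 k v && (#|v| == j)) ((#|A :&: dagger v| == t) : nat).
transitivity (\sum_(u : {set elt n} | V2 k u && (#|u| == i)) h (dagger u)).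
  rewrite [LHS](bigID (fun u => V2 k u && (#|u| == i))) /=.
  rewrite [X in _ + X]big1 ?addn0; last first.
    move=> u /negbTE hu; apply: big1 => v _.
    by move: hu; case: (V2 k u); case: (#|u| == i); rewrite //= andbF.
  apply: eq_bigr => u /andP [-> ->] /=.
  rewrite /h [LHS](bigID (fun v => V2 k v && (#|v| == j))) /=.
  rewrite [X in _ + X]big1 ?addn0; last first.
    by move=> v /negbTE hv; move: hv; case: (V2 k v); case: (#|v| == j).
  by apply: eq_bigr => v /andP [-> ->].
rewrite group_sum //.
rewrite (eq_bigr (fun _ => sgn k j * ('C(i, t) * 'C(n - i, j - t)))); last first.
  move=> A /andP [sA /eqP cA].
  rewrite /h (@group_sum n k (fun B => ((#|A :&: B| == t) : nat))) //.
  rewrite sum_ind -(inter_count sA cA tj); congr (_ * _).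
rewrite sum_nat_const.
have -> : #|(fun A : {set elt n} => (A \subset Bplus n) && (#|A| == i))| = 'C(n, i).
  have := cards_draws (Bplus n) i; rewrite card_Bplus => <-; by apply: eq_card => A; rewrite inE unfold_in.
rewrite !mulnA; lia.
Qed.


Lemma sum_eq1 (c m : nat) (F : pred nat) :
  \sum_(0 <= t < m | F t) ((c == t) : nat) = ((c < m) && F c).
Proof.
elim: m => [|m IH]; first by rewrite big_geq.
rewrite big_mkcond big_nat_recr //= -big_mkcond IH.
case: (ltngtP c m) => h.
- by rewrite ltnS (ltnW h); case: (F m); case: (F c).
- by rewrite ltnS leqNgt h; case: (F m).
- by subst c; rewrite ltnSn; case: (F m).
Qed.

Lemma card_split (T : finType) (P : pred T) (g : T -> nat) m (F : pred nat) :
  #|[set x | P x && (g x < m) && F (g x)]|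
  = \sum_(0 <= t < m | F t) #|[set x | P x && (g x == t)]|.
Proof.
under eq_bigr => t _ do rewrite -(sum_ind P (fun x => g x == t)).
rewrite exchange_big /=.
have -> : [set x | P x && (g x < m) && F (g x)] = [set x | P x && ((g x < m) && F (g x))].
  by apply/setP => x; rewrite !inE andbA.
rewrite -(sum_ind P (fun x => (g x < m) && F (g x))); apply: eq_bigr => x _.
by rewrite sum_eq1.
Qed.


Definition Ord n k i j := [set p : {set elt n} * {set elt n} |
  [&& V2 k p.1, V2 k p.2, #|p.1| == i, #|p.2| == j & distB k 4 p.1 p.2]].

Lemma union_bound n (u v : {set elt n}) :
  #|dagger u| + #|dagger v| <= n + #|dagger u :&: dagger v|.
Proof.
have := cardsU (dagger u) (dagger v).
have : #|dagger u :|: dagger v| <= #|Bplus n|.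
  by apply: subset_leq_card; rewrite subUset !dagger_sub.
rewrite card_Bplus.
have := subset_leq_card (subsetIl (dagger u) (dagger v)).
lia.
Qed.

Lemma ord_count n k i j : 0 < n -> k < n -> 0 < i -> i <= j ->
  #|Ord n k i j| = tsum n k i j (fun t =>
     'C(n, i) * sgn k i * sgn k j * 'C(i, t) * 'C(n - i, j - t)).
Proof.
move=> n0 kn i0 ij.
pose tp (p : {set elt n} * {set elt n}) := #|dagger p.1 :&: dagger p.2|.
pose base (p : {set elt n} * {set elt n}) := [&& V2 k p.1, V2 k p.2, #|p.1| == i & #|p.2| == j].
have -> : Ord n k i j = [set p | base p && (tp p < minn i k) &&
      ((fun t => (i + j <= n + t) && (t + k < i + j)) (tp p))].
  apply/setP => -[u v]; rewrite !inE /base /tp /=.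
  case hu: (V2 k u) => //=; case hv: (V2 k v) => //=.
  case: (eqVneq #|u| i) => //= cu; case: (eqVneq #|v| j) => //= cv.
  rewrite dist4 // cu cv.
  have := union_bound u v.
  have := subset_leq_card (subsetIl (dagger u) (dagger v)).
  have := subset_leq_card (subsetIr (dagger u) (dagger v)).
  case/andP: hu => pu _; case/andP: hv => pv _.
  rewrite !card_dagger // cu cv /NC.
  move: #|dagger u :&: dagger v| => t h1 h2 h3.
  apply/idP/idP.
    case/and4P => a1 a2 a3 a4; apply/and3P; split; lia.
  case/and3P => a1 a2 a3; apply/and4P; split; lia.
rewrite (card_split base tp (minn i k) (fun t => (i + j <= n + t) && (t + k < i + j))) /tsum big_nat_cond [RHS]big_nat_cond.
apply: eq_bigr => t /andP [/andP [_ h1] _].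
have tj : t <= j by move: h1 ij; lia.
have j0 : 0 < j by move: i0 ij; lia.
rewrite -Qcount //.
by apply: eq_card => -[u v]; rewrite !inE /base /tp /= -!andbA.
Qed.


Lemma sum_eq1g (c lo m : nat) (F : pred nat) :
  \sum_(lo <= t < m | F t) ((c == t) : nat) = [&& lo <= c, c < m & F c].
Proof.
rewrite (@big_nat_widenl _ _ _ lo 0 m F _ (leq0n lo)).
rewrite (sum_eq1 c m (fun t => F t && (lo <= t))).
by case: (lo <= c); case: (c < m); case: (F c).
Qed.

Lemma set2_inv (T : finType) (u v u' v' : T) : u' != v' ->
  [set u; v] = [set u'; v'] -> (u = u' /\ v = v') \/ (u = v' /\ v = u').
Proof.
move=> ne e.
have h1 : u' \in [set u; v] by rewrite e !inE eqxx.
have h2 : v' \in [set u; v] by rewrite e !inE eqxx orbT.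
rewrite !inE in h1 h2.
case/orP: h1 => /eqP e1; subst u'.
  case/orP: h2 => /eqP e2; subst v'; first by rewrite eqxx in ne.
  by left.
case/orP: h2 => /eqP e2; subst v'; last by rewrite eqxx in ne.
by right.
Qed.

Lemma distB_neq n k (u v : {set elt n}) : distB k 4 u v -> u != v.
Proof. by case/andP => _ /forallP /(_ (Ordinal (isT : 0 < 4))). Qed.

Lemma NC_sym k a b t : NC k a b t = NC k b a t.
Proof. by rewrite /NC (addnC a b); case: (t < a); case: (t < b); rewrite ?andbF ?andbT. Qed.

Lemma distB_sym n k (u v : {set elt n}) : 0 < n -> k < n -> V2 k u -> V2 k v ->
  distB k 4 u v = distB k 4 v u.
Proof.
move=> n0 kn hu hv; rewrite !dist4 // NC_sym; by rewrite setIC.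
Qed.

Lemma Ppairs_img n k i j :
  Ppairs n k i j = [set [set p.1; p.2] | p in Ord n k i j].
Proof.
apply/setP => E; rewrite inE; apply/existsP/imsetP.
  case=> u /existsP [v /and5P [/eqP -> _ hu hv /and3P [cu cv d]]].
  by exists (u, v) => //; rewrite inE hu hv cu cv d.
case=> -[u v]; rewrite inE /= => /and5P [hu hv cu cv d] ->.
exists u; apply/existsP; exists v; rewrite eqxx hu hv cu cv d (distB_neq d) //.
Qed.

Lemma P_lt n k i j : i < j -> P n k i j = #|Ord n k i j|.
Proof.
move=> ij; rewrite /P Ppairs_img card_in_imset // => -[u v] [u' v'].
rewrite !inE /= => /and5P [_ _ cu cv _] /and5P [_ _ cu' cv' d'] e.
case: (set2_inv (distB_neq d') e) => -[e1 e2]; first by rewrite e1 e2.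
by move: ij cu cv'; rewrite e1 => ? /eqP ? /eqP ?; lia.
Qed.

Lemma P_eq n k i : 0 < n -> k < n -> 2 * P n k i i = #|Ord n k i i|.
Proof.
move=> n0 kn.
rewrite /P Ppairs_img.
set O := Ord n k i i.
set f := fun p : {set elt n} * {set elt n} => [set p.1; p.2].
rewrite -[#|O|]sum1_card (partition_big f (mem (f @: O))); last first.
  by move=> p pO; apply/imsetP; exists p.
rewrite (eq_bigr (fun _ => 2)); last first.
  move=> E /imsetP [[u v] pO ->].
  rewrite sum1_card.
  have : (v, u) \in O.
    move: pO; rewrite !inE /= => /and5P [hu hv cu cv d].
    by rewrite hu hv cu cv -distB_sym.
  move: (pO); rewrite inE /= => /and5P [_ _ _ _ d] qO.
  have nuv : (u, v) != (v, u) by apply: contra (distB_neq d) => /eqP [->].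
  transitivity #|[set (u, v); (v, u)]|; last by rewrite cards2 nuv.
  apply: eq_card => -[x y]; rewrite !inE unfold_in /=.
  apply/andP/orP.
    case=> xO /eqP e; have nxy : x != y by move: xO; rewrite inE /= => /and5P [_ _ _ _ /distB_neq].
    case: (set2_inv nxy (esym e)) => -[e1 e2]; subst; [left|right]; by [].
  by case=> /eqP [-> ->]; rewrite ?pO ?qO /f //= setUC.
by rewrite sum_nat_const mulnC.
Qed.


Lemma dist_facts n k (u v : {set elt n}) : 0 < n -> k < n -> V2 k u -> V2 k v ->
  distB k 4 u v ->
  [/\ 1 <= #|u|, #|u| < n, #|v| < n, k.+1 <= #|u| + #|v| & #|u| + #|v| <= n + k - 1].
Proof.
move=> n0 kn hu hv; rewrite dist4 // /NC => /and4P [h1 h2 h3 h4].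
have := union_bound u v.
case/andP: hu => pu _; case/andP: hv => pv _.
rewrite !card_dagger // => h5.
split; lia.
Qed.

Lemma memPp n k (u v : {set elt n}) i j : distB k 4 u v -> V2 k u -> V2 k v ->
  #|u| <= #|v| -> i <= j ->
  ([set u; v] \in Ppairs n k i j) = (#|u| == i) && (#|v| == j).
Proof.
move=> d hu hv uv ij; rewrite inE; apply/existsP/andP.
  case=> u' /existsP [v' /and5P [/eqP e ne _ _ /and3P [/eqP cu /eqP cv _]]].
  case: (set2_inv ne e) => -[e1 e2]; subst; first by rewrite !eqxx.
  apply/andP; move: uv ij; lia.
case=> cu cv; exists u; apply/existsP; exists v.
by rewrite eqxx (distB_neq d) hu hv cu cv d.
Qed.

Lemma card_ind (T : finType) (S : {set T}) : #|S| = \sum_(x : T) ((x \in S) : nat).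
Proof. by rewrite (sum_ind xpredT (mem S)); apply: eq_card => x; rewrite !inE. Qed.

Definition D4 n k := [set E : {set {set elt n}} | [exists u, [exists v,
     [&& E == [set u; v], u != v, V2 k u, V2 k v & distB k 4 u v]]]].

Lemma perE n k (E : {set {set elt n}}) : 0 < n -> k < n ->
  \sum_(1 <= i < n) \sum_(i <= j < n | (k.+1 <= i + j) && (i + j <= n + k - 1))
     ((E \in Ppairs n k i j) : nat) = ((E \in D4 n k) : nat).
Proof.
move=> n0 kn.
case: (boolP (E \in D4 n k)) => ED; last first.
  apply: big1 => i _; apply: big1 => j _.
  case: (boolP (E \in Ppairs n k i j)) => // EP; exfalso; move/negP: ED; apply.
  move: EP; rewrite !inE => /existsP [u /existsP [v /and5P [e ne hu hv /and3P [_ _ d]]]].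
  by apply/existsP; exists u; apply/existsP; exists v; rewrite e ne hu hv d.
move: ED; rewrite inE => /existsP [u0 /existsP [v0 /and5P [/eqP e _ hu0 hv0 d0]]].
have [u [v [Ee hu hv d uv]]] : exists u v, [/\ E = [set u; v], V2 k u, V2 k v,
    distB k 4 u v & #|u| <= #|v|].
  case: (leqP #|u0| #|v0|) => h; first by exists u0, v0.
  exists v0, u0; split => //; first by rewrite e setUC.
  - by rewrite distB_sym.
  - exact: ltnW.
have [f1 f2 f3 f4 f5] := dist_facts n0 kn hu hv d.
set a := #|u|; set b := #|v|.
rewrite (eq_bigr (fun i => ((a == i) : nat) * [&& a <= b, b < n &
     (k.+1 <= a + b) && (a + b <= n + k - 1)])); last first.
  move=> i _; rewrite big_nat_cond.
  case: (eqVneq a i) => [ai|nai].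
    subst i; rewrite mul1n -(sum_eq1g b a n (fun j => (k.+1 <= a + j) && (a + j <= n + k - 1))).
    rewrite [RHS]big_nat_cond; apply: eq_bigr => j /andP [/andP [aj _] _].
    by rewrite Ee memPp // eqxx.
  rewrite mul0n; apply: big1 => j /andP [/andP [ij _] _].
  by rewrite Ee memPp //; move: nai; rewrite /a => /negbTE ->.
rewrite -big_distrl /= (sum_eq1g a 1 n xpredT).
by rewrite f1 f2 uv f3 /= f4 f5.
Qed.

Lemma part1 n k : 0 < n -> k < n ->
  d4V2 n k =
    \sum_(1 <= i < n) \sum_(i <= j < n | (k.+1 <= i + j) && (i + j <= n + k - 1))
       P n k i j.
Proof.
move=> n0 kn.
rewrite /d4V2 (_ : [set E | _] = D4 n k) // card_ind.
rewrite /P; symmetry.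
under eq_bigr => i _ do under eq_bigr => j _ do rewrite card_ind.
under eq_bigr => i _ do rewrite exchange_big.
rewrite exchange_big; apply: eq_bigr => E _.
by rewrite perE.
Qed.

Unset Implicit Arguments.

Theorem mainTheorem16 (n k : nat) :
  2 < n -> 1 < k -> k < n ->
  d4V2 n k =
    \sum_(1 <= i < n) \sum_(i <= j < n | (k.+1 <= i + j) && (i + j <= n + k - 1))
       P n k i j
  /\
  (forall i j, 1 <= i -> i <= j -> j <= n - 1 ->
     k.+1 <= i + j -> i + j <= n + k - 1 ->
     [/\ (i != k -> j != k -> i < j ->
            P n k i j = tsum n k i j (fun t =>
              'C(n, i) * 2 ^ (i - 1) * 2 ^ (j - 1) * 'C(n - i, j - t) * 'C(i, t))),
         (i = k -> k < j ->
            P n k i j = tsum n k i j (fun t =>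
              'C(n, k) * (2 ^ (k - 1) - 1) * 2 ^ (j - 1) * 'C(n - k, j - t) * 'C(k, t))),
         (i < j -> j = k ->
            P n k i j = tsum n k i j (fun t =>
              'C(n, i) * 2 ^ (i - 1) * (2 ^ (k - 1) - 1) * 'C(n - i, k - t) * 'C(i, t))),
         (i = j -> j = k ->
            2 * P n k i j = tsum n k i j (fun t =>
              'C(n, k) * (2 ^ (k - 1) - 1) ^ 2 * 'C(n - k, k - t) * 'C(k, t)))
       & (i = j -> i != k ->
            2 * P n k i j = tsum n k i j (fun t =>
              'C(n, i) * 2 ^ (2 * (i - 1)) * 'C(n - i, i - t) * 'C(i, t)))]).
Proof.
move=> n2 k1 kn.
have n0 : 0 < n by lia.
split; first exact: part1.
move=> i j i1 ij jn f1 f2.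
have i0 : 0 < i by lia.
split.
- move=> nik njk lt; rewrite P_lt // ord_count //; apply: eq_bigr => t _.
  rewrite /sgn (negbTE nik) (negbTE njk) !subn0; lia.
- move=> ik kj; subst i; rewrite P_lt // ord_count //; apply: eq_bigr => t _.
  rewrite /sgn eqxx (gtn_eqF kj) subn0 /=; lia.
- move=> lt jk; subst j; rewrite P_lt // ord_count //; apply: eq_bigr => t _.
  rewrite /sgn eqxx (ltn_eqF lt) subn0 /=; lia.
- move=> e jk; subst i j; rewrite P_eq // ord_count //; apply: eq_bigr => t _.
  rewrite /sgn eqxx /= -mulnn.
  move: (2 ^ (k - 1) - 1) => s; lia.
- move=> e nik; subst j; rewrite P_eq // ord_count //; apply: eq_bigr => t _.
  rewrite /sgn (negbTE nik) subn0 mul2n -addnn expnD.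
  move: (2 ^ (i - 1)) => s; lia.
Qed.
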